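(* Let $R_0>0$, $\alpha\in\big(0,\frac{1}{p'\bar q}\big)$, $\vartheta\in(0,1/2)$, $\lambda_0:=\exp(\exp(\vartheta^{-1/\alpha}))$, and for $r\in(0,R_0]$ let $$\omega(r)=\frac1\vartheta\Big[\frac{1}{\log(\log(\lambda_0R_0/r))}\Big]^\alpha.$$ Define $R_{j+1}:=\exp\big(-\frac\vartheta\alpha[\vartheta\omega(R_j)]^{-1/\alpha}\big)R_j$ for $j\in\mathbb{N}_0$. Then $\omega(R_0)=1$, $$\omega(R_{j+1})\ge\omega(R_j)\Big(1-\vartheta\exp\big(-[\vartheta\omega(R_j)]^{-1/\alpha}\big)\Big)\quad\text{and}\quad\omega(R_j)\le2\omega(R_{j+1})\quad\text{for all }j\in\mathbb{N}_0.$$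
   Context: $p\ge2$, $p'=p/(p-1)$, $n\ge2$, $\bar q:=1+n/p$ if $p<n$ and $\bar q:=2$ if $p\ge n$. *)

(* Defs.v *)
From Stdlib Require Import Reals.
Open Scope R_scope.

Definition qbar (p : R) (n : nat) : R :=
  if Rlt_dec p (INR n) then 1 + INR n / p else 2.

Definition pconj (p : R) : R := p / (p - 1).

Definition lambda0 (al th : R) : R := exp (exp (Rpower th (- / al))).

Definition omega (al th R0 r : R) : R :=
  / th * Rpower (/ ln (ln (lambda0 al th * R0 / r))) al.

Fixpoint Rseq (al th R0 : R) (j : nat) : R :=
  match j with
  | O => R0
  | S j' => exp (- (th / al) * Rpower (th * omega al th R0 (Rseq al th R0 j')) (- / al))
            * Rseq al th R0 j'
  end.

(* Main.v *)
Require Import Defs.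
From Stdlib Require Import Reals Lra.
Open Scope R_scope.

Definition XX al th R0 j := ln (lambda0 al th * R0 / Rseq al th R0 j).

Lemma Rseq_pos al th R0 j : 0 < R0 -> 0 < Rseq al th R0 j.
Proof. intros H; induction j; simpl; auto. apply Rmult_lt_0_compat; auto. apply exp_pos. Qed.

Lemma lam_pos al th : 0 < lambda0 al th.
Proof. unfold lambda0; apply exp_pos. Qed.

Lemma key al th R0 j : 0 < al -> 0 < th -> 1 < XX al th R0 j ->
  Rpower (th * omega al th R0 (Rseq al th R0 j)) (- / al) = ln (XX al th R0 j).
Proof.
  intros Ha Ht HX. unfold omega. fold (XX al th R0 j).
  assert (H0 : 0 < ln (XX al th R0 j)).
  { rewrite <- ln_1. apply ln_increasing; lra. }
  unfold Rpower at 2.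
  replace (th * (/ th * exp (al * ln (/ ln (XX al th R0 j)))))
    with (exp (al * ln (/ ln (XX al th R0 j)))) by (field; lra).
  unfold Rpower. rewrite ln_exp.
  replace (- / al * (al * ln (/ ln (XX al th R0 j)))) with (- ln (/ ln (XX al th R0 j))) by (field; lra).
  rewrite ln_Rinv by lra. rewrite Ropp_involutive. apply exp_ln; lra.
Qed.

Lemma XX_S al th R0 j : 0 < R0 -> 0 < al -> 0 < th -> 1 < XX al th R0 j ->
  XX al th R0 (S j) = XX al th R0 j + th / al * ln (XX al th R0 j).
Proof.
  intros HR Ha Ht HX. unfold XX at 1. simpl. rewrite key by auto.
  pose proof (Rseq_pos al th R0 j HR). pose proof (lam_pos al th).
  set (c := - (th / al) * ln (XX al th R0 j)).
  replace (lambda0 al th * R0 / (exp c * Rseq al th R0 j))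
    with ((lambda0 al th * R0 / Rseq al th R0 j) * exp (- c)).
  2:{ rewrite exp_Ropp. field. split; [lra| pose proof (exp_pos c); lra]. }
  rewrite ln_mult. 2:{ apply Rdiv_lt_0_compat; [apply Rmult_lt_0_compat|]; lra. }
  2: apply exp_pos.
  rewrite ln_exp. fold (XX al th R0 j). unfold c. ring.
Qed.

Lemma XX_gt1 al th R0 j : 0 < R0 -> 0 < al -> 0 < th -> 1 < XX al th R0 j.
Proof.
  intros HR Ha Ht. induction j.
  - unfold XX; simpl. replace (lambda0 al th * R0 / R0) with (lambda0 al th) by (field; lra).
    unfold lambda0. rewrite ln_exp. replace 1 with (exp 0) by apply exp_0.
    apply exp_increasing. unfold Rpower. apply exp_pos.
  - rewrite XX_S by auto.
    assert (0 < ln (XX al th R0 j)) by (rewrite <- ln_1; apply ln_increasing; lra).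
    assert (0 < th / al * ln (XX al th R0 j)).
    { apply Rmult_lt_0_compat; auto. apply Rdiv_lt_0_compat; auto. }
    lra.
Qed.

Lemma omega_eq al th R0 j : 0 < R0 -> 0 < al -> 0 < th ->
  omega al th R0 (Rseq al th R0 j) = / th * exp (- al * ln (ln (XX al th R0 j))).
Proof.
  intros HR Ha Ht. pose proof (XX_gt1 al th R0 j HR Ha Ht).
  assert (0 < ln (XX al th R0 j)) by (rewrite <- ln_1; apply ln_increasing; lra).
  unfold omega, Rpower. fold (XX al th R0 j). rewrite ln_Rinv by lra.
  f_equal. f_equal. ring.
Qed.

Theorem claim4p2 (p : R) (n : nat) (R0 al th : R) :
  2 <= p -> (2 <= n)%nat -> 0 < R0 ->
  0 < al -> al < / (pconj p * qbar p n) ->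
  0 < th -> th < / 2 ->
  omega al th R0 R0 = 1 /\
  (forall j : nat,
     omega al th R0 (Rseq al th R0 (S j)) >=
       omega al th R0 (Rseq al th R0 j) *
       (1 - th * exp (- Rpower (th * omega al th R0 (Rseq al th R0 j)) (- / al))) /\
     omega al th R0 (Rseq al th R0 j) <= 2 * omega al th R0 (Rseq al th R0 (S j))).
Proof.
  intros Hp Hn HR Ha Hal Ht Ht2. split.
  - change R0 with (Rseq al th R0 0). rewrite omega_eq by auto.
    unfold XX; simpl. replace (lambda0 al th * R0 / R0) with (lambda0 al th) by (field; lra).
    unfold lambda0. rewrite !ln_exp. unfold Rpower. rewrite ln_exp.
    replace (- al * (- / al * ln th)) with (ln th) by (field; lra).
    rewrite exp_ln by lra. field; lra.
  - intro j. rewrite key by (auto; apply XX_gt1; auto).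
    rewrite !omega_eq by auto.
    pose proof (XX_gt1 al th R0 j HR Ha Ht) as HX.
    rewrite XX_S by auto.
    set (X := XX al th R0 j) in *.
    set (Y := ln X).
    assert (HY : 0 < Y) by (unfold Y; rewrite <- ln_1; apply ln_increasing; lra).
    assert (HXe : exp Y = X) by (apply exp_ln; lra).
    assert (HeY : exp (- Y) = / X) by (rewrite exp_Ropp, HXe; reflexivity).
    rewrite HeY.
    set (u := th / al / X).
    assert (Hu : 0 < u) by (unfold u; apply Rdiv_lt_0_compat; [apply Rdiv_lt_0_compat|]; lra).
    assert (HY1 : ln (X + th / al * Y) <= Y * (1 + u)).
    { replace (X + th / al * Y) with (X * (1 + u * Y)) by (unfold u; field; split; lra).
      rewrite ln_mult by (try lra; assert (0 < u * Y) by (apply Rmult_lt_0_compat; lra); lra).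
      fold Y.
      assert (ln (1 + u * Y) <= u * Y).
      { assert (0 < u * Y) by (apply Rmult_lt_0_compat; lra).
        assert (h : ln (1 + u * Y) < ln (exp (u * Y))).
        { apply ln_increasing; [lra|]. apply exp_ineq1; lra. }
        rewrite ln_exp in h; lra. }
      nra. }
    assert (HYY : Y < ln (X + th / al * Y)).
    { unfold Y at 1. apply ln_increasing; [lra|].
      assert (0 < th / al * Y) by (apply Rmult_lt_0_compat; [apply Rdiv_lt_0_compat|]; lra). lra. }
    set (Y' := ln (X + th / al * Y)) in *.
    set (d := al * (ln Y' - ln Y)).
    assert (Hd : d <= th / X).
    { unfold d.
      assert (ln Y' <= ln Y + u).
      { assert (ln Y' <= ln (Y * (1 + u))).
        { destruct (Rle_lt_or_eq_dec _ _ HY1) as [h|h].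
          - left. apply ln_increasing; lra.
          - rewrite h; lra. }
        rewrite ln_mult in H by lra.
        assert (ln (1 + u) <= u).
        { assert (h : ln (1 + u) < ln (exp u)).
          { apply ln_increasing; [lra|]. apply exp_ineq1; lra. }
          rewrite ln_exp in h; lra. }
        lra. }
      replace (th / X) with (al * u) by (unfold u; field; split; lra).
      apply Rmult_le_compat_l; lra. }
    assert (Hd0 : 0 <= d).
    { unfold d. apply Rmult_le_pos; [lra|]. left. apply Rlt_Rminus. apply ln_increasing; lra. }
    assert (Hom : / th * exp (- al * ln Y') = / th * exp (- al * ln Y) * exp (- d)).
    { rewrite Rmult_assoc, <- exp_plus. f_equal. f_equal. unfold d. ring. }
    rewrite Hom.
    assert (Hw : 0 < / th * exp (- al * ln Y)).
    { apply Rmult_lt_0_compat; [apply Rinv_0_lt_compat; lra| apply exp_pos]. }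
    assert (HXinv : / X < 1) by (rewrite <- Rinv_1; apply Rinv_lt_contravar; lra).
    assert (HtX : th / X <= th).
    { unfold Rdiv. assert (0 < / X) by (apply Rinv_0_lt_compat; lra). nra. }
    split.
    + apply Rle_ge. apply Rmult_le_compat_l; [lra|].
      pose proof (exp_ineq1_le (- d)). unfold Rdiv in Hd. lra.
    + assert (exp d < 2).
      { assert (exp d <= exp (/2)).
        { destruct (Rle_lt_or_eq_dec d (/2)) as [h|h]; [lra| left; apply exp_increasing; auto | rewrite h; lra]. }
        assert (exp (/2) * exp (/2) <= 3).
        { rewrite <- exp_plus. replace (/2 + /2) with 1 by field. apply exp_le_3. }
        assert (0 < exp (/2)) by apply exp_pos.
        nra. }
      rewrite exp_Ropp.
      assert (0 < exp d) by apply exp_pos.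
      set (w := / th * exp (- al * ln Y)) in *.
      replace (2 * (w * / exp d)) with (w * (2 / exp d)) by (field; lra).
      rewrite <- (Rmult_1_r w) at 1. apply Rmult_le_compat_l; [lra|].
      apply (Rmult_le_reg_r (exp d)); [lra|]. unfold Rdiv. rewrite Rmult_assoc, Rinv_l by lra. lra.
Qed.
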